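(* A function $f:X\to Y$ between topological spaces is strongly-$SC^*$-closed if and only if for every subset $J\subseteq Y$ and every $SC^*$-open set $M$ in $X$ with $f^{-1}(J)\subseteq M$, there exists an $SC^*$-open set $N$ in $Y$ with $J\subseteq N$ and $f^{-1}(N)\subseteq M$.
   Context: For $A\subseteq Z$ in a topological space $Z$: $A$ is semi-open if $A\subseteq cl(int(A))$, semi-closed if its complement is semi-open; $scl(A)$ is the smallest semi-closed set containing $A$. $A$ is $c^*$-open if $int(cl(A))\subseteq A\subseteq cl(int(A))$. $A$ is $SC^*$-closed if $scl(A)\subseteq U$ whenever $A\subseteq U$ and $U$ is $c^*$-open; $A$ is $SC^*$-open if $Z\setminus A$ is $SC^*$-closed. A function $f:X\to Y$ is strongly-$SC^*$-closed if $f(M)$ is $SC^*$-closed in $Y$ for every $SC^*$-closed set $M$ in $X$. *)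

(* Defs.v *)
From mathcomp Require Import all_boot all_classical.
From mathcomp Require Import topology.
Local Open Scope classical_set_scope.

Section SCstar.
Context {Z : topologicalType}.

Definition semi_open (A : set Z) : Prop := A `<=` closure (A^°).

Definition semi_closed (A : set Z) : Prop := semi_open (~` A).

Definition scl (A : set Z) : set Z :=
  \bigcap_(B in [set B | semi_closed B /\ A `<=` B]) B.

Definition cstar_open (A : set Z) : Prop :=
  (closure A)^° `<=` A /\ A `<=` closure (A^°).

Definition SCstar_closed (A : set Z) : Prop :=
  forall U : set Z, A `<=` U -> cstar_open U -> scl A `<=` U.

Definition SCstar_open (A : set Z) : Prop := SCstar_closed (~` A).

End SCstar.

Definition strongly_SCstar_closed {X Y : topologicalType} (f : X -> Y) : Prop :=
  forall M : set X, SCstar_closed M -> SCstar_closed (f @` M).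

(* Main.v *)
Require Import Defs.
From mathcomp Require Import all_boot all_classical.
From mathcomp Require Import topology.
Local Open Scope classical_set_scope.

Theorem theorem3p3 (X Y : topologicalType) (f : X -> Y) :
  strongly_SCstar_closed f <->
  (forall (J : set Y) (M : set X),
      SCstar_open M -> f @^-1` J `<=` M ->
      exists N : set Y, SCstar_open N /\ J `<=` N /\ f @^-1` N `<=` M).
Proof.
split.
- move=> H J M MO JM.
  exists (~` (f @` (~` M))); split; [|split].
  + rewrite /SCstar_open setCK; exact: H.
  + move=> y Jy [x nMx fxy]; apply: nMx; apply: JM; rewrite /= fxy //.
  + move=> x /= Nx; apply: contrapT => nMx; apply: Nx; by exists x.
- move=> H M MC.
  have MO : SCstar_open (~` M) by rewrite /SCstar_open setCK.
  have [N [NO [JN NM]]] := H (~` (f @` M)) (~` M) MO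
    (fun x (hx : ~ (f @` M) (f x)) (mx : M x) => hx (ex_intro2 _ _ x mx erefl)).
  have -> : f @` M = ~` N.
    apply/seteqP; split.
    * move=> y [x Mx <-] Nfx; exact: (NM x Nfx Mx).
    * move=> y nN; apply: contrapT => nf; exact: nN (JN y nf).
  exact: NO.
Qed.
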